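(* Let $A$ be the $b\times v$ incidence matrix of a $(v,b,r,k,\lambda)$-BIBD with $k<v$, let $\theta\in(0,1)$, $\alpha_1=\theta/r$, $\alpha_2=(1-\theta)/(b-r)$, and $Q=\alpha_1A+\alpha_2(J_{b\times v}-A)$, and assume $Q$ has rank $v$. Let $\pi$ be the uniform distribution on the $v$ points, let $\rho=Q\pi$ be the induced distribution on the $b$ blocks, and let $D_\rho$ be the $b\times b$ diagonal matrix with $\rho_1,\dots,\rho_b$ on the diagonal. Then the estimator $$L=(Q^TD_\rho^{-1}Q)^{-1}Q^TD_\rho^{-1}$$ is equal to the Moore–Penrose inverse $(Q^TQ)^{-1}Q^T$ of $Q$.
   Context: A $(v,b,r,k,\lambda)$-BIBD is a set system with $v$ points and $b$ blocks, each block of size $k$, each point in exactly $r$ blocks, each pair of distinct points in exactly $\lambda$ blocks. $J_{b\times v}$ is the all-ones matrix. $Q$ is the transition probability matrix of the LDP protocol based on the BIBD. The estimator $(Q^TD_\rho^{-1}Q)^{-1}Q^TD_\rho^{-1}$ is the unbiased linear estimator (left inverse of $Q$) minimizing the risk $\mathsf{trace}(LD_\rho L^T)-\sum_j p_j^2$ among left inverses $L$ of $Q$. *)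

(* Defs.v *)
From mathcomp Require Import all_boot all_order all_algebra.
Set Implicit Arguments. Unset Strict Implicit. Unset Printing Implicit Defensive.
Import Order.TTheory GRing.Theory Num.Theory.
Local Open Scope ring_scope.

(* A (v,b,r,k,lambda)-BIBD given by its incidence relation:
   [inc i j] means point j lies in block i (blocks 'I_b, points 'I_v). *)
Definition is_BIBD (v b r k lam : nat) (inc : 'I_b -> 'I_v -> bool) : Prop :=
  [/\ (forall i : 'I_b, #|[set j | inc i j]| = k),
      (forall j : 'I_v, #|[set i | inc i j]| = r) &
      (forall j1 j2 : 'I_v, j1 != j2 -> #|[set i | inc i j1 && inc i j2]| = lam)].

Definition incidence_mx (R : nzRingType) (v b : nat) (inc : 'I_b -> 'I_v -> bool)
  : 'M[R]_(b, v) := \matrix_(i, j) (inc i j)%:R.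

Definition bibd_Q (R : fieldType) (v b r : nat) (theta : R) (A : 'M[R]_(b, v))
  : 'M[R]_(b, v) :=
  (theta / r%:R) *: A + ((1 - theta) / (b%:R - r%:R)) *: (const_mx 1 - A).

Definition unif_pi (R : fieldType) (v : nat) : 'cV[R]_v := const_mx (v%:R^-1).

(* Main.v *)
Require Import Defs.
From mathcomp Require Import all_boot all_order all_algebra.
Import Order.TTheory GRing.Theory Num.Theory.
Local Open Scope ring_scope.

Lemma QtQ_unit (R : realFieldType) (b v : nat) (Q : 'M[R]_(b, v)) :
  \rank Q = v -> Q^T *m Q \in unitmx.
Proof.
move=> rk; rewrite -row_free_unit; apply: inj_row_free => x hx.
set y := x *m Q^T.
have hyy : y *m y^T = 0.
  by rewrite /y trmx_mul trmxK !mulmxA -(mulmxA x) hx mul0mx.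
have sq0 : forall y : 'rV[R]_b, y *m y^T = 0 -> y = 0.
  move=> {}y {}hyy.
  apply/rowP => i; rewrite [RHS]mxE.
  have := congr1 (fun M : 'M[R]_1 => M 0 0) hyy; rewrite /= [RHS]mxE => hs.
  rewrite mxE in hs.
  have nn : forall j, xpredT j -> 0 <= y 0 j * y^T j 0.
    by move=> j _; rewrite mxE -expr2 sqr_ge0.
  have /eqP := @psumr_eq0P R _ xpredT _ nn hs i isT.
  by rewrite mxE mulf_eq0 orbb => /eqP.
have y0 := sq0 y hyy.
have fr : row_free Q^T by rewrite -row_leq_rank mxrank_tr rk.
apply: (row_free_inj fr); by rewrite mul0mx.
Qed.

Theorem mainTheorem5 (R : realFieldType) (v b r k lam : nat)
    (inc : 'I_b -> 'I_v -> bool) (theta : R) :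
  is_BIBD r k lam inc ->
  (k < v)%N ->
  0 < theta < 1 ->
  let A : 'M[R]_(b, v) := incidence_mx R inc in
  let Q := bibd_Q r theta A in
  \rank Q = v ->
  let rho : 'cV[R]_b := Q *m unif_pi R v in
  let D : 'M[R]_b := diag_mx rho^T in
  invmx (Q^T *m invmx D *m Q) *m Q^T *m invmx D = invmx (Q^T *m Q) *m Q^T.
Proof.
move=> [hk hr _] kv /andP[th0 th1] A Q rk rho D.
have v0 : (0 < v)%N by apply: leq_ltn_trans kv.
have b0 : (0 < b)%N.
  by have := rank_leq_row Q; rewrite rk => vb; exact: leq_trans v0 vb.
set a1 := theta / r%:R.
set a2 := (1 - theta) / (b%:R - r%:R).
have rowsum : forall i, \sum_j A i j = k%:R.
  move=> i; rewrite -(hk i) cardsE.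
  rewrite (eq_bigr (fun j => if inc i j then 1 else 0)); last first.
    by move=> j _; rewrite /A /incidence_mx mxE; case: (inc i j).
  by rewrite -big_mkcond sumr_const.
set c := (a1 * k%:R + a2 * (v%:R - k%:R)) / v%:R.
have rhoE : rho = const_mx c.
  apply/matrixP => i z; rewrite /rho !mxE.
  rewrite (eq_bigr (fun j => (a1 * A i j + a2 * (1 - A i j)) * v%:R^-1)); last first.
    by move=> j _; rewrite /Q /bibd_Q /unif_pi !mxE.
  rewrite -big_distrl /= big_split /= -!mulr_sumr sumrB rowsum sumr_const card_ord.
  by rewrite /c.
have rb : (r < b)%N.
  have rleb : (r <= b)%N by rewrite -(hr (Ordinal v0)); apply: leq_trans (max_card _) _; rewrite card_ord.
  rewrite ltn_neqAle rleb andbT; apply/eqP => rbE.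
  have allin : forall j, [set i | inc i j] = setT.
    by move=> j; apply/eqP; rewrite eqEcard subsetT cardsT card_ord hr rbE leqnn.
  have : k = v.
    have e : [set j | inc (Ordinal b0) j] = setT.
      apply/setP => j; rewrite !inE.
      by move: (allin j) => /setP /(_ (Ordinal b0)); rewrite !inE.
    by rewrite -(hk (Ordinal b0)) e cardsT card_ord.
  by move=> kE; move: kv; rewrite kE ltnn.
have a1ge : 0 <= a1 by rewrite /a1 divr_ge0 // ltW.
have a2gt : 0 < a2.
  by rewrite /a2 divr_gt0 // ?subr_gt0 // ltr_nat.
have c0 : c != 0.
  rewrite /c mulf_neq0 // ?invr_eq0 ?pnatr_eq0 -?lt0n //.
  apply/lt0r_neq0/ltr_wpDl; first by rewrite mulr_ge0.
  by rewrite mulr_gt0 // subr_gt0 ltr_nat.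
have DE : D = c%:M by rewrite /D rhoE trmx_const diag_const_mx.
rewrite DE invmx_scalar [Q^T *m _%:M]mul_mx_scalar -scalemxAl.
have cu : c^-1 \is a GRing.unit by rewrite unitfE invr_eq0.
rewrite invmxZ ?unitmxZ ?QtQ_unit // invrK mul_mx_scalar -!scalemxAl scalerA.
by rewrite mulVf // scale1r.
Qed.
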